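(* Let $m\ge4$ and let $p=(p_1,\dots,p_m)$, $q=(q_1,\dots,q_m)$ be ordered $m$-tuples of distinct points of $\partial\mathbf H^n_{\mathbb H}$, with invariants computed using lifts whose Gram matrices are semi-normalized. If the $(d+1)$-tuples $F(p)=(u_0,\mathbb X_1,\dots,\mathbb X_d)$ and $F(q)$, $d=\frac{m(m-3)}{2}$, are $\mathrm{Sp}(1)$-congruent and $\mathbb A_{23}(p)=\mathbb A_{23}(q)$, then $p$ and $q$ are $\mathrm{PSp}(n,1)$-congruent. That is, the $\mathrm{Sp}(1)$-congruence class of $F$ and $\mathbb A_{23}$ determine the $\mathrm{PSp}(n,1)$-congruence class of $p$.
   Context: $\mathbb H^{n,1}$ is the right quaternionic vector space $\mathbb H^{n+1}$ with Hermitian form $\langle\mathbf z,\mathbf w\rangle=\bar w_{n+1}z_1+\bar w_2z_2+\cdots+\bar w_nz_n+\bar w_1z_{n+1}$; $\partial\mathbf H^n_{\mathbb H}$ is the set of quaternionic lines of nonzero null vectors; $\mathrm{PSp}(n,1)=\mathrm{Sp}(n,1)/\{\pm I\}$ where $\mathrm{Sp}(n,1)$ preserves the form. For a lift $(\mathbf p_1,\dots,\mathbf p_m)$ the Gram matrix is $g_{kj}=\langle\mathbf p_j,\mathbf p_k\rangle$; it is semi-normalized if $g_{1j}=1$ for $2\le j\le m$ and $|g_{23}|=1$ (diagonal entries are $0$). Cross ratio $\mathbb X(z_1,z_2,z_3,z_4)=\langle\mathbf z_3,\mathbf z_1\rangle\langle\mathbf z_3,\mathbf z_2\rangle^{-1}\langle\mathbf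 z_4,\mathbf z_2\rangle\langle\mathbf z_4,\mathbf z_1\rangle^{-1}$; $\mathbb X_1,\dots,\mathbb X_d$ list in a fixed order $\mathbb X(\mathbf p_1,\mathbf p_2,\mathbf p_3,\mathbf p_j)$, $\mathbb X(\mathbf p_1,\mathbf p_3,\mathbf p_2,\mathbf p_j)$ ($4\le j\le m$) and $\mathbb X(\mathbf p_1,\mathbf p_k,\mathbf p_2,\mathbf p_j)$ ($4\le k<j\le m$). $\mathbb A_{23}=\arccos\frac{\Re(-\langle\mathbf p_1,\mathbf p_2,\mathbf p_3\rangle)}{|\langle\mathbf p_1,\mathbf p_2,\mathbf p_3\rangle|}$ with $\langle\mathbf z_1,\mathbf z_2,\mathbf z_3\rangle=\langle\mathbf z_1,\mathbf z_2\rangle\langle\mathbf z_2,\mathbf z_3\rangle\langle\mathbf z_3,\mathbf z_1\rangle$. $u_0=\Im(g_{23})/|\Im(g_{23})|$ if $\mathbb A_{23}\ne0$, else $u_0=0$. Tuples $F,F'$ are $\mathrm{Sp}(1)$-congruent if $F'=\mu F\bar\mu$ componentwise for some unit quaternion $\mu$. *)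

(* Defs.v *)
From mathcomp Require Import all_boot all_order all_algebra.
From mathcomp Require Import reals trigo.
Set Implicit Arguments. Unset Strict Implicit. Unset Printing Implicit Defensive.
Import Order.TTheory GRing.Theory Num.Theory.
Local Open Scope ring_scope.

Record quat (R : Type) := Quat { qre : R; qi : R; qj : R; qk : R }.

Section Quaternions.
Variable R : realType.
Local Notation H := (quat R).

Definition q0 : H := Quat 0 0 0 0.
Definition q1 : H := Quat 1 0 0 0.
Definition qadd (x y : H) : H :=
  Quat (qre x + qre y) (qi x + qi y) (qj x + qj y) (qk x + qk y).
Definition qopp (x : H) : H := Quat (- qre x) (- qi x) (- qj x) (- qk x).
Definition qmul (x y : H) : H :=
  let: Quat a1 b1 c1 d1 := x in let: Quat a2 b2 c2 d2 := y in
  Quat (a1*a2 - b1*b2 - c1*c2 - d1*d2)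
       (a1*b2 + b1*a2 + c1*d2 - d1*c2)
       (a1*c2 - b1*d2 + c1*a2 + d1*b2)
       (a1*d2 + b1*c2 - c1*b2 + d1*a2).
Definition qconj (x : H) : H := Quat (qre x) (- qi x) (- qj x) (- qk x).
Definition qscale (r : R) (x : H) : H := Quat (r * qre x) (r * qi x) (r * qj x) (r * qk x).
Definition qnorm2 (x : H) : R := qre x ^+ 2 + qi x ^+ 2 + qj x ^+ 2 + qk x ^+ 2.
Definition qabs (x : H) : R := Num.sqrt (qnorm2 x).
Definition qinv (x : H) : H := qscale (qnorm2 x)^-1 (qconj x).
Definition qIm (x : H) : H := Quat 0 (qi x) (qj x) (qk x).
Definition qsum (s : seq H) : H := foldr qadd q0 s.

(** Vectors of H^{n,1} = H^{n+1}, coordinates indexed 0..n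
    (paper's coordinate k is index k-1). *)
Definition qvec (n : nat) := 'I_n.+1 -> H.
Definition qmat (n : nat) := 'I_n.+1 -> 'I_n.+1 -> H.

Definition vscale n (z : qvec n) (l : H) : qvec n := fun i => qmul (z i) l.
Definition mact n (A : qmat n) (z : qvec n) : qvec n :=
  fun i => qsum [seq qmul (A i j) (z j) | j <- enum 'I_n.+1].

(** <z,w> = conj(w_{n+1}) z_1 + conj(w_2) z_2 + ... + conj(w_n) z_n + conj(w_1) z_{n+1} *)
Definition hform n (z w : qvec n) : H :=
  qadd (qmul (qconj (w ord_max)) (z ord0))
   (qadd (qsum [seq qmul (qconj (w i)) (z i) | i <- [seq i : 'I_n.+1 <- enum 'I_n.+1 | (0 < nat_of_ord i < n)%N]])
         (qmul (qconj (w ord0)) (z ord_max))).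

Definition vnonzero n (z : qvec n) : Prop := exists i, z i <> q0.
(** nonzero null vector: a lift of a point of the boundary of H^n_H *)
Definition null_lift n (z : qvec n) : Prop := vnonzero z /\ hform z z = q0.
Definition same_point n (z w : qvec n) : Prop :=
  exists l : H, l <> q0 /\ w = vscale z l.

Definition in_Sp n (A : qmat n) : Prop :=
  (forall z w : qvec n, hform (mact A z) (mact A w) = hform z w) /\
  exists B : qmat n, forall z : qvec n, mact B (mact A z) = z /\ mact A (mact B z) = z.

(** Tuples of points are encoded by lifts P : nat -> qvec n, P j being the lift
    of p_{j+1} (only indices j < m matter). *)
Definition distinct_boundary_tuple n (m : nat) (P : nat -> qvec n) : Prop :=
  (forall j, (j < m)%N -> null_lift (P j)) /\
  (forall i j, (i < m)%N -> (j < m)%N -> i <> j -> ~ same_point (P i) (P j)).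

(** Gram matrix g_{kj} = <p_j, p_k> (paper's 1-based indices). *)
Definition gram n (P : nat -> qvec n) (k j : nat) : H := hform (P j.-1) (P k.-1).

Definition semi_normalized n (m : nat) (P : nat -> qvec n) : Prop :=
  (forall j, (2 <= j <= m)%N -> gram P 1 j = q1) /\ qabs (gram P 2 3) = 1.

Definition cross_ratio n (z1 z2 z3 z4 : qvec n) : H :=
  qmul (qmul (qmul (hform z3 z1) (qinv (hform z3 z2))) (hform z4 z2))
       (qinv (hform z4 z1)).

Definition triple n (z1 z2 z3 : qvec n) : H :=
  qmul (qmul (hform z1 z2) (hform z2 z3)) (hform z3 z1).

Definition A23 n (P : nat -> qvec n) : R :=
  acos (qre (qopp (triple (P 0) (P 1) (P 2))) / qabs (triple (P 0) (P 1) (P 2))).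

Definition u0 n (P : nat -> qvec n) : H :=
  if A23 P != 0 then qscale (qabs (qIm (gram P 2 3)))^-1 (qIm (gram P 2 3)) else q0.

(** The (d+1)-tuple F = (u0, X_1, ..., X_d), d = m(m-3)/2, in the fixed order:
    X(p1,p2,p3,pj) (4<=j<=m), X(p1,p3,p2,pj) (4<=j<=m),
    X(p1,pk,p2,pj) (4<=k<j<=m, lexicographic in (k,j)).
    (0-based: p_i is P (i-1).) *)
Definition Finv n (m : nat) (P : nat -> qvec n) : seq H :=
  u0 P ::
  [seq cross_ratio (P 0) (P 1) (P 2) (P j) | j <- iota 3 (m - 3)] ++
  [seq cross_ratio (P 0) (P 2) (P 1) (P j) | j <- iota 3 (m - 3)] ++
  flatten [seq [seq cross_ratio (P 0) (P k) (P 1) (P j) | j <- iota k.+1 (m - k.+1)]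
          | k <- iota 3 (m - 3)].

Definition sp1_congruent (F F' : seq H) : Prop :=
  exists mu : H, qabs mu = 1 /\ F' = [seq qmul (qmul mu x) (qconj mu) | x <- F].

(** PSp(n,1)-congruence of m-tuples of boundary points (the action of PSp(n,1)
    on points is that of Sp(n,1)): some A in Sp(n,1) maps p_i to q_i. *)
Definition psp_congruent n (m : nat) (P Q : nat -> qvec n) : Prop :=
  exists A : qmat n, in_Sp A /\
    forall i, (i < m)%N -> same_point (mact A (P i)) (Q i).

End Quaternions.

(* Main.v *)
From HB Require Import structures.
Require Import Defs.
From mathcomp Require Import all_boot all_order all_algebra.
From mathcomp Require Import reals trigo boolp.
From mathcomp Require Import ring lra zify.
Set Implicit Arguments. Unset Strict Implicit. Unset Printing Implicit Defensive.
Import Order.TTheory GRing.Theory Num.Theory.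
Local Open Scope ring_scope.

Section QRing.
Variable R : realType.
Definition q2p (x : quat R) := (qre x, qi x, qj x, qk x).
Definition p2q (p : R * R * R * R) := let: (a,b,c,d) := p in Quat a b c d.
Lemma q2pK : cancel q2p p2q. Proof. by case. Qed.
HB.instance Definition _ := Choice.copy (quat R) (can_type q2pK).

Lemma quatE (x y : quat R) : qre x = qre y -> qi x = qi y -> qj x = qj y -> qk x = qk y -> x = y.
Proof. by case: x; case: y => /= ? ? ? ? ? ? ? ? -> -> -> ->. Qed.

Ltac qsolve := apply: quatE; rewrite /=; ring.

Lemma qaddA : associative (@qadd R). Proof. move=> [? ? ? ?] [? ? ? ?] [? ? ? ?]; qsolve. Qed.
Lemma qaddC : commutative (@qadd R). Proof. move=> [? ? ? ?] [? ? ? ?]; qsolve. Qed.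
Lemma qadd0 : left_id (@q0 R) (@qadd R). Proof. move=> [? ? ? ?]; qsolve. Qed.
Lemma qaddN : left_inverse (@q0 R) (@qopp R) (@qadd R). Proof. move=> [? ? ? ?]; qsolve. Qed.
Lemma qmulA : associative (@qmul R). Proof. move=> [? ? ? ?] [? ? ? ?] [? ? ? ?]; qsolve. Qed.
Lemma qmul1 : left_id (@q1 R) (@qmul R). Proof. move=> [? ? ? ?]; qsolve. Qed.
Lemma qmulr1 : right_id (@q1 R) (@qmul R). Proof. move=> [? ? ? ?]; qsolve. Qed.
Lemma qmulDl : left_distributive (@qmul R) (@qadd R). Proof. move=> [? ? ? ?] [? ? ? ?] [? ? ? ?]; qsolve. Qed.
Lemma qmulDr : right_distributive (@qmul R) (@qadd R). Proof. move=> [? ? ? ?] [? ? ? ?] [? ? ? ?]; qsolve. Qed.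
Lemma q1n0 : (q1 R) != q0 R.
Proof. apply/eqP => /(congr1 (@qre R)) /= /eqP; by rewrite oner_eq0. Qed.

HB.instance Definition _ := GRing.isNzRing.Build (quat R) qaddA qaddC qadd0 qaddN
  qmulA qmul1 qmulr1 qmulDl qmulDr q1n0.

Lemma qaddE (x y : quat R) : qadd x y = x + y. Proof. by []. Qed.
Lemma qmulE (x y : quat R) : qmul x y = x * y. Proof. by []. Qed.
Lemma q0E : q0 R = 0 :> quat R. Proof. by []. Qed.
Lemma q1E : q1 R = 1 :> quat R. Proof. by []. Qed.
Lemma qoppE (x : quat R) : qopp x = - x. Proof. by []. Qed.
Lemma qsumE (s : seq (quat R)) : qsum s = \sum_(x <- s) x.
Proof. elim: s => [|a s IH]; by rewrite ?big_nil ?big_cons //= -IH. Qed.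
End QRing.

Section Q2.
Variable R : realType.
Implicit Types x y z mu : quat R.
Ltac qsolve := apply: quatE; rewrite /=; ring.

Definition rq (r : R) : quat R := Quat r 0 0 0.

Lemma qconjM x y : qconj (x * y) = qconj y * qconj x.
Proof. case: x => ? ? ? ?; case: y => ? ? ? ?; qsolve. Qed.
Lemma qconjD x y : qconj (x + y) = qconj x + qconj y.
Proof. case: x => ? ? ? ?; case: y => ? ? ? ?; qsolve. Qed.
Lemma qconjN x : qconj (- x) = - qconj x.
Proof. case: x => ? ? ? ?; qsolve. Qed.
Lemma qconjK x : qconj (qconj x) = x.
Proof. case: x => ? ? ? ?; qsolve. Qed.
Lemma qconj0 : qconj 0 = 0 :> quat R. Proof. qsolve. Qed.
Lemma qconj1 : qconj 1 = 1 :> quat R. Proof. qsolve. Qed.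
Lemma qconj_rq r : qconj (rq r) = rq r. Proof. qsolve. Qed.
Lemma rqC r x : rq r * x = x * rq r.
Proof. case: x => ? ? ? ?; qsolve. Qed.
Lemma rqM r s : rq r * rq s = rq (r * s). Proof. qsolve. Qed.
Lemma rqD r s : rq r + rq s = rq (r + s). Proof. qsolve. Qed.
Lemma rq1 : rq 1 = 1. Proof. qsolve. Qed.
Lemma rq0 : rq 0 = 0. Proof. qsolve. Qed.
Lemma qscaleE r x : qscale r x = rq r * x.
Proof. case: x => ? ? ? ?; qsolve. Qed.
Lemma mul_conj x : x * qconj x = rq (qnorm2 x).
Proof. case: x => ? ? ? ?; rewrite /qnorm2; qsolve. Qed.
Lemma conj_mul x : qconj x * x = rq (qnorm2 x).
Proof. case: x => ? ? ? ?; rewrite /qnorm2; qsolve. Qed.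
Lemma qnorm2_ge0 x : 0 <= qnorm2 x.
Proof. by rewrite /qnorm2 !addr_ge0 ?sqr_ge0. Qed.
Lemma qnorm2_eq0 x : qnorm2 x = 0 -> x = 0.
Proof.
case: x => a b c d; rewrite /qnorm2 /= => H.
have := sqr_ge0 a; have := sqr_ge0 b; have := sqr_ge0 c; have := sqr_ge0 d => *.
have ha : a ^+ 2 = 0 by lra.
have hb : b ^+ 2 = 0 by lra.
have hc : c ^+ 2 = 0 by lra.
have hd : d ^+ 2 = 0 by lra.
move: ha hb hc hd => /eqP; rewrite expf_eq0 /= => /eqP->.
move=> /eqP; rewrite expf_eq0 /= => /eqP->.
move=> /eqP; rewrite expf_eq0 /= => /eqP->.
move=> /eqP; rewrite expf_eq0 /= => /eqP->; by [].
Qed.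
Lemma qnorm2M x y : qnorm2 (x * y) = qnorm2 x * qnorm2 y.
Proof. case: x => ? ? ? ?; case: y => ? ? ? ?; rewrite /qnorm2 /=; ring. Qed.
Lemma qnorm2_conj x : qnorm2 (qconj x) = qnorm2 x.
Proof. case: x => ? ? ? ?; rewrite /qnorm2 /=; ring. Qed.

Lemma qinvE x : qinv x = rq (qnorm2 x)^-1 * qconj x.
Proof. by rewrite /qinv qscaleE. Qed.
Lemma qmulVq x : x != 0 -> qinv x * x = 1.
Proof.
move=> nx; rewrite qinvE -mulrA conj_mul rqM mulVf ?rq1 //.
by apply/eqP=> /qnorm2_eq0 /eqP; rewrite (negbTE nx).
Qed.
Lemma qmulqV x : x != 0 -> x * qinv x = 1.
Proof.
move=> nx; rewrite qinvE mulrA -rqC -mulrA mul_conj rqM mulVf ?rq1 //.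
by apply/eqP=> /qnorm2_eq0 /eqP; rewrite (negbTE nx).
Qed.
Lemma qinv0 : qinv 0 = 0 :> quat R.
Proof. rewrite qinvE qconj0; by rewrite mulr0. Qed.
Lemma qinv_uniq x y : x != 0 -> y * x = 1 -> y = qinv x.
Proof. move=> nx h; by rewrite -[y]mulr1 -(qmulqV nx) mulrA h mul1r. Qed.
Lemma qmulI x y z : x != 0 -> x * y = x * z -> y = z.
Proof. move=> nx h; by rewrite -[y]mul1r -(qmulVq nx) -mulrA h mulrA qmulVq // mul1r. Qed.
Lemma qmulIr x y z : x != 0 -> y * x = z * x -> y = z.
Proof. move=> nx h; by rewrite -[y]mulr1 -(qmulqV nx) mulrA h -mulrA qmulqV // mulr1. Qed.
Lemma qmul_neq0 x y : x != 0 -> y != 0 -> x * y != 0.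
Proof.
move=> nx ny; apply/eqP => h.
have : qinv x * (x * y) = 0 by rewrite h mulr0.
by rewrite mulrA qmulVq // mul1r; apply/eqP.
Qed.
Lemma qinv_neq0 x : x != 0 -> qinv x != 0.
Proof. move=> nx; apply/eqP=> h; move: (qmulVq nx); rewrite h mul0r => /eqP; by rewrite eq_sym oner_eq0. Qed.
Lemma qconj_eq0 x : (qconj x == 0) = (x == 0).
Proof. apply/eqP/eqP => h; last by rewrite h qconj0. by rewrite -[x]qconjK h qconj0. Qed.
Lemma qconj_inv x : qconj (qinv x) = qinv (qconj x).
Proof.
have [->|nx] := eqVneq x 0; first by rewrite qconj0 qinv0 qconj0.
apply: qinv_uniq; first by rewrite qconj_eq0.
by rewrite -qconjM qmulqV // qconj1.
Qed.

Variable mu : quat R.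
Hypothesis hmu : qnorm2 mu = 1.
Definition cj x := mu * x * qconj mu.
Lemma mu_c : mu * qconj mu = 1. Proof. by rewrite mul_conj hmu rq1. Qed.
Lemma c_mu : qconj mu * mu = 1. Proof. by rewrite conj_mul hmu rq1. Qed.
Lemma cjM x y : cj (x * y) = cj x * cj y.
Proof. by rewrite /cj !mulrA -(mulrA _ (qconj mu)) c_mu mulr1. Qed.
Lemma cjD x y : cj (x + y) = cj x + cj y.
Proof. by rewrite /cj mulrDr mulrDl. Qed.
Lemma cjN x : cj (- x) = - cj x.
Proof. by rewrite /cj mulrN mulNr. Qed.
Lemma cj0 : cj 0 = 0. Proof. by rewrite /cj mulr0 mul0r. Qed.
Lemma cj1 : cj 1 = 1. Proof. by rewrite /cj mulr1 mu_c. Qed.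
Lemma cj_rq r : cj (rq r) = rq r.
Proof. by rewrite /cj -rqC -mulrA mu_c mulr1. Qed.
Lemma cj_conj x : cj (qconj x) = qconj (cj x).
Proof. by rewrite /cj !qconjM qconjK mulrA. Qed.
Lemma cj_eq0 x : (cj x == 0) = (x == 0).
Proof.
apply/eqP/eqP => h; last by rewrite h cj0.
have : qconj mu * cj x * mu = x by rewrite /cj !mulrA c_mu mul1r -mulrA c_mu mulr1.
by rewrite h mulr0 mul0r.
Qed.
Lemma cj_inv x : cj (qinv x) = qinv (cj x).
Proof.
have [->|nx] := eqVneq x 0; first by rewrite qinv0 cj0 qinv0.
apply: qinv_uniq; first by rewrite cj_eq0.
by rewrite -cjM qmulVq // cj1.
Qed.
Lemma cj_norm2 x : qnorm2 (cj x) = qnorm2 x.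
Proof. by rewrite /cj !qnorm2M hmu qnorm2_conj hmu mul1r mulr1. Qed.
Lemma cj_re x : qre (cj x) = qre x.
Proof.
rewrite /cj; move: hmu; case: x => a b c d; case: mu => e f g h; rewrite /qnorm2 /= => H.
rewrite -[RHS]mulr1 -H; ring.
Qed.
Lemma cj_scale r x : cj (qscale r x) = qscale r (cj x).
Proof. by rewrite !qscaleE cjM cj_rq. Qed.
Lemma qImE x : qIm x = x - rq (qre x).
Proof. case: x => ? ? ? ?; qsolve. Qed.
Lemma cj_Im x : cj (qIm x) = qIm (cj x).
Proof. by rewrite !qImE cjD cjN cj_rq cj_re. Qed.
End Q2.

Section Vec.
Variable R : realType.
Variable n : nat.
Local Notation V := (qvec R n).
Implicit Types z w u v : V.

Definition vadd z w : V := fun i => z i + w i.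
Definition vsub z w : V := fun i => z i - w i.
Definition vzero : V := fun _ => 0.
Definition mid := [seq i : 'I_n.+1 <- enum 'I_n.+1 | (0 < nat_of_ord i < n)%N].

Lemma hformE z w : hform z w =
  qconj (w ord_max) * z ord0 + (\sum_(i <- mid) qconj (w i) * z i + qconj (w ord0) * z ord_max).
Proof. by rewrite /hform qsumE big_map. Qed.

Lemma qconj_sum (I : Type) (s : seq I) (F : I -> quat R) :
  qconj (\sum_(i <- s) F i) = \sum_(i <- s) qconj (F i).
Proof. elim: s => [|a s IH]; by rewrite ?big_nil ?big_cons ?qconj0 // qconjD IH. Qed.

Lemma hformDl z w u : hform (vadd z w) u = hform z u + hform w u.
Proof.
rewrite !hformE /vadd.
rewrite (eq_bigr (fun i => qconj (u i) * z i + qconj (u i) * w i)); last by move=> i _; rewrite mulrDr.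
rewrite big_split /= !mulrDr.
set a := qconj _ * z _; set b := qconj _ * w _; set c := qconj _ * z _; set d := qconj _ * w _.
set S1 := \sum_(i <- _) _; set S2 := \sum_(i <- _) _.
by rewrite [_ + (c + d)]addrACA [LHS]addrACA.
Qed.

Lemma hformZl z l u : hform (vscale z l) u = hform z u * l.
Proof.
rewrite !hformE /vscale !mulrDl big_distrl /=; rewrite !qmulE !mulrA.
by congr (_ + (_ + _)); apply: eq_bigr => i _; rewrite mulrA.
Qed.

Lemma hform_sym z w : hform w z = qconj (hform z w).
Proof.
rewrite !hformE !qconjD qconj_sum !qconjM !qconjK.
have -> : \sum_(i <- mid) qconj (qconj (w i) * z i) = \sum_(i <- mid) qconj (z i) * w i.
  by apply: eq_bigr => i _; rewrite qconjM qconjK.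
set a := qconj (z ord_max) * w ord0; set c := qconj (z ord0) * w ord_max.
by rewrite addrCA [in RHS]addrCA [c + a]addrC.
Qed.

Lemma hformDr z w u : hform u (vadd z w) = hform u z + hform u w.
Proof. by rewrite hform_sym hformDl qconjD -!hform_sym. Qed.
Lemma hformZr z l u : hform u (vscale z l) = qconj l * hform u z.
Proof. by rewrite hform_sym hformZl qconjM -hform_sym. Qed.

Lemma vsubE z w : vsub z w = vadd z (vscale w (-1)).
Proof. apply: funext => i; by rewrite /vsub /vadd /vscale qmulE mulrN1. Qed.
Lemma hformBl z w u : hform (vsub z w) u = hform z u - hform w u.
Proof. by rewrite vsubE hformDl hformZl mulrN1. Qed.
Lemma hformBr z w u : hform u (vsub z w) = hform u z - hform u w.
Proof. by rewrite vsubE hformDr hformZr qconjN qconj1 mulN1r. Qed.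
Lemma hform0l u : hform vzero u = 0.
Proof.
have -> : vzero = vscale u 0 by apply: funext => i; rewrite /vscale qmulE mulr0.
by rewrite hformZl mulr0.
Qed.
Lemma hform0r u : hform u vzero = 0.
Proof. by rewrite hform_sym hform0l qconj0. Qed.

Lemma null_zero v : hform v v = 0 -> v ord0 = v ord_max -> forall i, v i = 0.
Proof.
move=> h e.
have Hre : qre (hform v v) = 0 by rewrite h.
rewrite hformE -e in Hre.
have reD : forall x y : quat R, qre (x + y) = qre x + qre y by [].
rewrite !reD in Hre.
have reS : forall s : seq 'I_n.+1, qre (\sum_(i <- s) qconj (v i) * v i) = \sum_(i <- s) qnorm2 (v i).
  elim=> [|a s IH]; rewrite ?big_nil ?big_cons //= -IH.
  rewrite -[qnorm2 _]/(qre (rq (qnorm2 (v a)))) -conj_mul; by [].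
rewrite reS in Hre.
have q0r : qre (qconj (v ord0) * v ord0) = qnorm2 (v ord0) by rewrite conj_mul.
rewrite q0r in Hre.
have S0 : 0 <= \sum_(i <- mid) qnorm2 (v i) by apply: sumr_ge0 => i _; exact: qnorm2_ge0.
have N0 := qnorm2_ge0 (v ord0).
have a0 : qnorm2 (v ord0) = 0 by lra.
have s0 : \sum_(i <- mid) qnorm2 (v i) = 0 by lra.
move=> i.
have [i0|i0] := eqVneq (nat_of_ord i) 0%N.
  by apply: qnorm2_eq0; rewrite (_ : i = ord0) //; apply: val_inj.
have [im|im] := eqVneq (nat_of_ord i) n.
  by apply: qnorm2_eq0; rewrite (_ : i = ord_max) -?e //; apply: val_inj; rewrite /= im.
have imid : i \in mid.
  rewrite mem_filter mem_enum andbT lt0n i0 /= ltn_neqAle im /=; by rewrite -ltnS.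
move/eqP: s0; rewrite psumr_eq0; last by move=> j _; exact: qnorm2_ge0.
move/allP => /(_ i imid) /= /eqP; exact: qnorm2_eq0.
Qed.
End Vec.

Lemma subABC (M : zmodType) (a b c e : M) : a - b - (c - e) = a - c - (b - e).
Proof. by rewrite !opprB !addrA [a - b + e]addrAC [a - c + e]addrAC [RHS]addrAC. Qed.

Section Lin.
Variable R : realType.
Variable n : nat.
Local Notation V := (qvec R n).
Implicit Types z w u v d : V.

Lemma null_prop z w : hform z z = 0 -> hform w w = 0 -> vnonzero w -> hform z w = 0 ->
  exists l, z = vscale w l.
Proof.
move=> hz hw [k wk] hzw.
have w0 : w ord0 - w ord_max != 0.
  apply/eqP => e; apply: wk; apply: (null_zero hw); apply/eqP; rewrite -subr_eq0; exact/eqP.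
set l := qinv (w ord0 - w ord_max) * (z ord0 - z ord_max).
exists l.
have hwz : hform w z = 0 by rewrite hform_sym hzw qconj0.
set v := vsub z (vscale w l).
have hv : hform v v = 0.
  rewrite /v !hformBl !hformBr !hformZl !hformZr hz hw hzw hwz.
  by rewrite !(mulr0, mul0r, subr0).
have ev : v ord0 = v ord_max.
  apply/eqP; rewrite -subr_eq0; apply/eqP.
  rewrite /v /vsub /vscale !qmulE.
  have -> : z ord0 - w ord0 * l - (z ord_max - w ord_max * l)
     = (z ord0 - z ord_max) - (w ord0 - w ord_max) * l.
    by rewrite subABC mulrBl.
  by rewrite /l mulrA qmulqV // mul1r subrr.
apply: funext => i; move: (null_zero hv ev i); rewrite /v /vsub => /eqP.
by rewrite subr_eq0 => /eqP.
Qed.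

Lemma distinct_form z w : null_lift z -> null_lift w -> ~ same_point w z -> hform z w != 0.
Proof.
move=> [[k zk] hz] [nw hw] ns; apply/eqP => h.
have [l hl] := null_prop hz hw nw h.
apply: ns; exists l; split=> //.
move=> l0; apply: zk; rewrite hl /vscale l0 qmulE; by rewrite q0E mulr0.
Qed.

Definition lin (f : V -> V) :=
  (forall z w, f (vadd z w) = vadd (f z) (f w)) /\ (forall z l, f (vscale z l) = vscale (f z) l).

Definition evec (j : 'I_n.+1) : V := fun k => if k == j then 1 else 0.

Lemma lin0 f : lin f -> f (@vzero R n) = (@vzero R n).
Proof.
move=> [_ hs].
have e : (@vzero R n) = vscale (@vzero R n) 0.
  by apply: funext => i; rewrite /vscale /vzero qmulE mulr0.
rewrite {1}e hs; apply: funext => i; by rewrite /vscale /vzero qmulE mulr0.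
Qed.

Lemma lin_mat f : lin f -> exists M : qmat R n, forall z, mact M z = f z.
Proof.
move=> hf; exists (fun i j => f (evec j) i) => z.
pose vs (s : seq 'I_n.+1) := foldr (fun j acc => vadd (vscale (evec j) (z j)) acc) ((@vzero R n)) s.
have Hf : forall s i, f (vs s) i = \sum_(j <- s) f (evec j) i * z j.
  elim=> [|a s IH] i; first by rewrite big_nil /= (lin0 hf).
  by rewrite big_cons /= hf.1 hf.2 /vadd /vscale IH.
have Hv : forall s i, vs s i = \sum_(j <- s) (if i == j then z j else 0).
  elim=> [|a s IH] i; first by rewrite big_nil.
  rewrite big_cons /= /vadd /vscale /evec IH qmulE; congr (_ + _).
  by case: (i == a); rewrite ?mul1r ?mul0r.
have -> : z = vs (enum 'I_n.+1).
  apply: funext => i; rewrite Hv big_enum /= (bigD1 i) //= eqxx big1 ?addr0 //.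
  by move=> j /negbTE; rewrite eq_sym => ->.
apply: funext => i; rewrite /mact qsumE big_map Hf.
have -> : vs (enum 'I_n.+1) = z.
  apply: funext => k; rewrite Hv big_enum /= (bigD1 k) //= eqxx big1 ?addr0 //.
  by move=> j /negbTE; rewrite eq_sym => ->.
by [].
Qed.

Definition good (f : V -> V) :=
  [/\ lin f, (forall z w, hform (f z) (f w) = hform z w) &
      exists g, [/\ lin g, (forall z, g (f z) = z) & (forall z, f (g z) = z)]].

Lemma good_id : good id.
Proof. split=> //; exists id; split=> //. Qed.

Lemma good_comp f g : good f -> good g -> good (fun z => f (g z)).
Proof.
move=> [[fa fs] fh [f' [[f'a f's] f'1 f'2]]] [[ga gs] gh [g' [[g'a g's] g'1 g'2]]].
split.
- split=> *; by rewrite ?ga ?fa ?gs ?fs.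
- by move=> z w; rewrite fh gh.
- exists (fun z => g' (f' z)); split.
  + split=> *; by rewrite ?f'a ?g'a ?f's ?g's.
  + by move=> z; rewrite f'1 g'1.
  + by move=> z; rewrite g'2 f'2.
Qed.

Lemma good_Sp f : good f -> exists M : qmat R n, in_Sp M /\ forall z, mact M z = f z.
Proof.
move=> [lf hf [g [lg g1 g2]]].
have [M HM] := lin_mat lf; have [B HB] := lin_mat lg.
exists M; split=> //; split.
- by move=> z w; rewrite !HM hf.
- exists B => z; by rewrite !HM !HB g1 g2.
Qed.
End Lin.

Section Transv.
Variable R : realType.
Variable n : nat.
Local Notation V := (qvec R n).
Implicit Types z w u v d : V.
Lemma vscaleE z (l : quat R) i : vscale z l i = z i * l. Proof. by []. Qed.
Lemma vaddE z w i : vadd z w i = z i + w i. Proof. by []. Qed.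

Definition S d (b : quat R) (v : V) : V := vadd v (vscale d (b * hform v d)).

Lemma S_lin d b : lin (S d b).
Proof.
split.
- move=> z w; apply: funext => i; rewrite /S ?vaddE ?vscaleE ?vaddE ?vscaleE hformDl.
  move: (hform z d) (hform w d) => a a'.
  by rewrite mulrDr mulrDr addrACA.
- move=> z l; apply: funext => i; rewrite /S ?vaddE ?vscaleE ?vaddE ?vscaleE hformZl.
  move: (hform z d) => a.
  by rewrite mulrDl !mulrA.
Qed.

Lemma S_comp d b c v : S d b (S d c v) = S d (c + b + b * hform d d * c) v.
Proof.
apply: funext => i; rewrite /S hformDl hformZl ?vaddE ?vscaleE ?vaddE ?vscaleE.
move: (hform v d) (hform d d) => a N.
rewrite -addrA; congr (_ + _).
by rewrite !mulrDl !mulrDr !mulrA addrA.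
Qed.

Lemma S_zero d v : S d 0 v = v.
Proof. apply: funext => i; rewrite /S vaddE vscaleE; by rewrite !mul0r mulr0 addr0. Qed.

Lemma S_fix d b u : hform u d = 0 -> S d b u = u.
Proof. move=> h; apply: funext => i; rewrite /S h vaddE vscaleE; by rewrite !mulr0 addr0. Qed.

Lemma S_iso d b : qconj b + b + qconj b * hform d d * b = 0 ->
  forall v w, hform (S d b v) (S d b w) = hform v w.
Proof.
move=> K v w; rewrite /S hformDl !hformDr !hformZl !hformZr.
rewrite qconjM -(hform_sym w d).
move: (hform d w) (hform v d) (hform d d) K => D a N K.
rewrite -addrA.
have -> : D * qconj b * a + (D * (b * a) + D * qconj b * N * (b * a))
   = D * (qconj b + b + qconj b * N * b) * a.
  by rewrite !mulrDr !mulrDl !mulrA !addrA.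
by rewrite K mulr0 mul0r addr0.
Qed.
End Transv.

Section Transv2.
Variable R : realType.
Variable n : nat.
Local Notation V := (qvec R n).
Implicit Types z w u v d x y : V.

Lemma real_rq (x : quat R) : x = qconj x -> x = rq (qre x).
Proof.
case: x => a b c e /= h; case: h => hb hc he.
apply: quatE => /=; lra.
Qed.

Lemma S_good d b : qconj b + b + qconj b * hform d d * b = 0 -> good (S d b).
Proof.
move=> K.
have hN : hform d d = rq (qre (hform d d)) by apply: real_rq; rewrite -hform_sym.
have e1 : qconj b * rq (qre (hform d d)) * b = rq (qre (hform d d) * qnorm2 b).
  by rewrite -rqC -mulrA conj_mul rqM.
have e2 : b * rq (qre (hform d d)) * qconj b = rq (qre (hform d d) * qnorm2 b).
  by rewrite -rqC -mulrA mul_conj rqM.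
have K2 : qconj b + b + b * hform d d * qconj b = 0.
  by move: K; rewrite hN e1 e2.
split; first exact: S_lin.
  exact: S_iso.
exists (S d (qconj b)); split; first exact: S_lin.
- move=> z; by rewrite S_comp [b + _]addrC K S_zero.
- move=> z; by rewrite S_comp K2 S_zero.
Qed.

Definition T x y := S (vsub x y) (qinv (hform x y)).

Lemma T_good x y : hform x x = 0 -> hform y y = 0 -> hform x y != 0 -> good (T x y).
Proof.
move=> hx hy c0; apply: S_good.
have c'0 : hform y x != 0 by rewrite hform_sym qconj_eq0.
rewrite qconj_inv -hform_sym hformBl !hformBr hx hy.
move: (hform x y) (hform y x) c0 c'0 => c c' c0 c'0.
rewrite sub0r subr0 -opprD mulrN mulNr mulrDr mulrDl -mulrA qmulqV // mulr1 qmulVq // mul1r.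
by rewrite subrr.
Qed.

Lemma T_map x y : hform x x = 0 -> hform x y != 0 -> T x y x = y.
Proof.
move=> hx c0; apply: funext => i.
rewrite /T /S vaddE vscaleE hformBr hx sub0r mulrN qmulVq //.
by rewrite mulrN1 /vsub opprB addrC subrK.
Qed.

Lemma T_fix x y u : hform u x = hform u y -> T x y u = u.
Proof. move=> h; apply: S_fix; by rewrite hformBr h subrr. Qed.
End Transv2.

Section Construct.
Variable R : realType.
Variable n : nat.
Local Notation V := (qvec R n).
Implicit Types z w u v d x y : V.

Lemma good_nonzero f x : good f -> vnonzero x -> vnonzero (f x).
Proof.
move=> [lf _ [g [lg g1 _]]] [i xi].
case: (pselect (vnonzero (f x))) => // hn; exfalso; apply: xi.
have fx0 : f x = @vzero R n.
  apply: funext => j; apply: contra_notP hn => hj; exists j; exact: hj.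
by rewrite -(g1 x) fx0 (lin0 lg).
Qed.

Variables (m : nat) (X Y : nat -> V).
Hypotheses (hm : (2 <= m)%N) (hXn : forall i, (i < m)%N -> vnonzero (X i))
  (hY : distinct_boundary_tuple m Y)
  (hG : forall a b, (a < m)%N -> (b < m)%N -> hform (X a) (X b) = hform (Y a) (Y b)).

Lemma Yform a b : (a < m)%N -> (b < m)%N -> a <> b -> hform (Y a) (Y b) != 0.
Proof.
move=> am bm ab; case: hY => hn hd.
apply: distinct_form; [exact: hn | exact: hn | exact: hd bm am (nesym ab)].
Qed.

Lemma construct k : (k <= m)%N -> exists f, good f /\ forall i, (i < k)%N -> f (X i) = Y i.
Proof.
elim: k => [|k IH] km.
  by exists id; split=> //; exact: good_id.
have km' : (k < m)%N by [].
have [f [gf hf]] := IH (ltnW km).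
set x := f (X k); set y := Y k.
have [lf iso _] := gf.
have hx : hform x x = 0 by rewrite /x iso hG // (proj2 ((proj1 hY) k km')).
have hy : hform y y = 0 by rewrite /y (proj2 ((proj1 hY) k km')).
have nx : vnonzero x by apply: good_nonzero => //; exact: hXn.
have ny : vnonzero y by exact: (proj1 ((proj1 hY) k km')).
have hxi : forall i, (i < k)%N -> hform (Y i) x = hform (Y i) y.
  move=> i ik; rewrite /x -(hf i ik) iso hG ?hf //; exact: ltn_trans ik km'.
have [c0|c0] := eqVneq (hform x y) 0; last first.
  exists (fun z => T x y (f z)); split; first by apply: good_comp => //; exact: T_good.
  move=> i; rewrite ltnS leq_eqVlt => /orP [/eqP ->|ik].
    by rewrite T_map.
  by rewrite hf // T_fix // hxi.
have [l hl] := null_prop hx hy ny c0.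
case: (posnP k) => [k0|kpos].
-
  have m1 : (1 < m)%N by [].
  set z := Y 1.
  have hz : hform z z = 0 by rewrite /z (proj2 ((proj1 hY) 1%N m1)).
  have l0 : l != 0.
    apply/eqP => l0; case: nx => i; rewrite hl l0 /vscale qmulE mulr0; by [].
  have cxz : hform x z != 0.
    by rewrite hl hformZl; apply: qmul_neq0 => //; apply: Yform => //; rewrite k0.
  have czy : hform z y != 0 by apply: Yform => //; rewrite k0.
  exists (fun w => T z y (T x z (f w))); split.
    apply: good_comp; first exact: T_good.
    apply: good_comp => //; exact: T_good.
  move=> i; rewrite ltnS => ik; have -> : i = k by apply/eqP; rewrite eqn_leq ik k0.
  by rewrite -/x T_map // T_map.
-
  exists f; split=> // i; rewrite ltnS leq_eqVlt => /orP [/eqP ->|ik]; last exact: hf.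
  have e1 : hform (Y 0%N) x = hform (Y 0%N) y by apply: hxi.
  have hy0 : hform y (Y 0%N) != 0 by apply: Yform => //; [exact: ltn_trans kpos km' | move=> e; move: kpos; rewrite e].
  have e2 : hform x (Y 0%N) = hform y (Y 0%N).
    by rewrite (hform_sym (Y 0%N) x) e1 -hform_sym.
  move: e2; rewrite hl hformZl => e2.
  have l1 : l = 1.
    apply: (qmulI hy0); by rewrite e2 mulr1.
  rewrite -/x hl l1; apply: funext => j; by rewrite /vscale qmulE mulr1.
Qed.
End Construct.

Section Extract.
Variable R : realType.
Variable n : nat.
Local Notation V := (qvec R n).

Lemma qabs1 (x : quat R) : qabs x = 1 -> qnorm2 x = 1.
Proof. move=> h; by rewrite -(sqr_sqrtr (qnorm2_ge0 x)) -/(qabs x) h expr1n. Qed.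

Lemma extract m (P Q : nat -> V) : sp1_congruent (Finv m P) (Finv m Q) ->
  exists mu : quat R, [/\ qnorm2 mu = 1, u0 Q = cj mu (u0 P),
    (forall j, (3 <= j < m)%N -> cross_ratio (Q 0) (Q 1) (Q 2) (Q j) = cj mu (cross_ratio (P 0) (P 1) (P 2) (P j))),
    (forall j, (3 <= j < m)%N -> cross_ratio (Q 0) (Q 2) (Q 1) (Q j) = cj mu (cross_ratio (P 0) (P 2) (P 1) (P j))) &
    (forall k j, (3 <= k)%N -> (k < j < m)%N -> cross_ratio (Q 0) (Q k) (Q 1) (Q j) = cj mu (cross_ratio (P 0) (P k) (P 1) (P j)))].
Proof.
move=> [mu [hmu e]]; exists mu; move: e.
rewrite /Finv /= !map_cat map_flatten -!map_comp => [[e0 e]].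
have f1 : forall (X : nat -> V) (F : V -> V -> V -> V -> quat R) s, size [seq F (X 0%N) (X 1%N) (X 2%N) (X j) | j <- s] = size s.
  by move=> *; rewrite size_map.
move/eqP: e; rewrite eqseq_cat ?size_map // => /andP [/eqP e1].
rewrite eqseq_cat ?size_map // => /andP [/eqP e2 /eqP e3].
split.
- exact: qabs1.
- by rewrite e0.
- move=> j hj; move/eq_in_map: e1 => /(_ j); rewrite mem_iota.
  have -> : (3 <= j < 3 + (m - 3))%N by lia.
  by move=> /(_ isT).
- move=> j hj; move/eq_in_map: e2 => /(_ j); rewrite mem_iota.
  have -> : (3 <= j < 3 + (m - 3))%N by lia.
  by move=> /(_ isT).
- move=> k j hk hj.
  move: e3 => /eq_from_flatten_shape H; lapply H; last first.
    rewrite /shape -!map_comp.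
    apply: eq_map => k0 /=; by rewrite !size_map.
  move=> {H}/eq_in_map /(_ k); rewrite mem_iota.
  have -> : (3 <= k < 3 + (m - 3))%N by lia.
  move=> /(_ isT) /=; rewrite -map_comp => /eq_in_map /(_ j); rewrite mem_iota.
  have -> : (k.+1 <= j < k.+1 + (m - k.+1))%N by lia.
  by move=> /(_ isT).
Qed.
End Extract.

Section Gram.
Variable R : realType.
Variable n : nat.
Local Notation V := (qvec R n).

Lemma re_bound (x : quat R) : qnorm2 x = 1 -> -1 <= qre x <= 1.
Proof.
case: x => a b c d; rewrite /qnorm2 /= => h.
have := sqr_ge0 b; have := sqr_ge0 c; have := sqr_ge0 d => *.
have ha : a ^+ 2 <= 1 by lra.
have h1 : 0 <= a ^+ 2 + 2 * a + 1 by have := sqr_ge0 (a + 1); rewrite sqrrD mulr1 expr1n -mulr_natl; lra.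
have h2 : 0 <= a ^+ 2 - 2 * a + 1 by have := sqr_ge0 (a - 1); rewrite sqrrB mulr1 expr1n -mulr_natl; lra.
apply/andP; split; lra.
Qed.

Lemma norm2_Im (x : quat R) : qnorm2 (qIm x) = qnorm2 x - qre x ^+ 2.
Proof. case: x => a b c d; rewrite /qnorm2 /=; ring. Qed.

Lemma qinv1 : qinv 1 = 1 :> quat R.
Proof. symmetry; apply: qinv_uniq; by rewrite ?mul1r ?oner_neq0. Qed.

Variables (m : nat) (X : nat -> V).
Hypotheses (hm : (4 <= m)%N) (hX : distinct_boundary_tuple m X) (sX : semi_normalized m X).

Lemma G_null a : (a < m)%N -> hform (X a) (X a) = 0.
Proof. move=> am; exact: (proj2 ((proj1 hX) a am)). Qed.
Lemma G_a0 a : (1 <= a < m)%N -> hform (X a) (X 0%N) = 1.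
Proof.
move=> ha; have := (proj1 sX) a.+1; rewrite /gram /= => -> //.
Qed.
Lemma G_0a a : (1 <= a < m)%N -> hform (X 0%N) (X a) = 1.
Proof. move=> ha; by rewrite hform_sym G_a0 // qconj1. Qed.
Lemma G_nz a b : (a < m)%N -> (b < m)%N -> a <> b -> hform (X a) (X b) != 0.
Proof.
move=> am bm ab; case: hX => hn hd.
apply: distinct_form; [exact: hn | exact: hn | exact: hd bm am (nesym ab)].
Qed.
Definition g := hform (X 2) (X 1).
Lemma g_norm : qnorm2 g = 1.
Proof. apply: qabs1; exact: (proj2 sX). Qed.
Lemma g_nz : g != 0.
Proof. apply/eqP => h; move: g_norm; rewrite h /qnorm2 /= expr0n /= !addr0 => /eqP; by rewrite eq_sym oner_eq0. Qed.

Lemma CR1 j : (3 <= j < m)%N -> hform (X j) (X 1) = g * cross_ratio (X 0%N) (X 1) (X 2) (X j).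
Proof.
move=> hj; rewrite /cross_ratio G_a0 ?G_a0 //; try lia.
rewrite qinv1 !qmulE mulr1 mul1r mulrA qmulqV ?mul1r //; exact: g_nz.
Qed.
Lemma CR2 j : (3 <= j < m)%N -> hform (X j) (X 2) = qconj g * cross_ratio (X 0%N) (X 2) (X 1) (X j).
Proof.
move=> hj; rewrite /cross_ratio G_a0 ?G_a0 //; try lia.
rewrite qinv1 !qmulE mulr1 mul1r mulrA /g -hform_sym qmulqV ?mul1r //.
apply: G_nz; lia.
Qed.
Lemma CR3 k j : (3 <= k)%N -> (k < j < m)%N ->
  hform (X j) (X k) = hform (X 1) (X k) * cross_ratio (X 0%N) (X k) (X 1) (X j).
Proof.
move=> hk hj; rewrite /cross_ratio G_a0 ?G_a0 //; try lia.
rewrite qinv1 !qmulE mulr1 mul1r mulrA qmulqV ?mul1r //.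
apply: G_nz; lia.
Qed.

Lemma A23E : A23 X = acos (- qre g).
Proof.
rewrite /A23 /triple G_0a ?G_a0 //; try lia.
rewrite !qmulE mul1r mulr1 -/g.
have -> : hform (X 1) (X 2) = qconj g by rewrite /g -hform_sym.
rewrite /qabs qnorm2_conj g_norm sqrtr1 divr1.
by case: (g).
Qed.

Lemma cosA23 : cos (A23 X) = - qre g.
Proof.
rewrite A23E; have := re_bound g_norm; move: (qre g) => r /andP [h1 h2].
rewrite acosK // in_itv /=; apply/andP; split; lra.
Qed.
End Gram.

Section Main.
Variable R : realType.
Variable n : nat.
Local Notation V := (qvec R n).
Variables (m : nat) (P Q : nat -> V) (mu : quat R).
Hypotheses (hm : (4 <= m)%N) (hP : distinct_boundary_tuple m P) (hQ : distinct_boundary_tuple m Q)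
  (sP : semi_normalized m P) (sQ : semi_normalized m Q) (hmu : qnorm2 mu = 1)
  (E0 : u0 Q = cj mu (u0 P))
  (E1 : forall j, (3 <= j < m)%N -> cross_ratio (Q 0) (Q 1) (Q 2) (Q j) = cj mu (cross_ratio (P 0) (P 1) (P 2) (P j)))
  (E2 : forall j, (3 <= j < m)%N -> cross_ratio (Q 0) (Q 2) (Q 1) (Q j) = cj mu (cross_ratio (P 0) (P 2) (P 1) (P j)))
  (E3 : forall k j, (3 <= k)%N -> (k < j < m)%N -> cross_ratio (Q 0) (Q k) (Q 1) (Q j) = cj mu (cross_ratio (P 0) (P k) (P 1) (P j)))
  (eA : A23 P = A23 Q).

Lemma re_eq : qre (g Q) = qre (g P).
Proof.
have h1 := cosA23 hm sP; have h2 := cosA23 hm sQ.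
rewrite eA h2 in h1; lra.
Qed.

Lemma decomp (x : quat R) : x = rq (qre x) + qIm x.
Proof. by rewrite qImE addrC subrK. Qed.

Lemma Im_zero (X : nat -> V) : (4 <= m)%N -> semi_normalized m X -> A23 X = 0 -> qIm (g X) = 0.
Proof.
move=> hm' sX h; apply: qnorm2_eq0; rewrite norm2_Im (g_norm sX).
have := cosA23 hm' sX; rewrite h cos0 => e.
have -> : qre (g X) = -1 by lra.
by rewrite sqrrN expr1n subrr.
Qed.

Lemma step_g : g Q = cj mu (g P).
Proof.
rewrite (decomp (g Q)) [RHS]decomp (cj_re hmu) re_eq; congr (_ + _).
have nQ : qnorm2 (qIm (g Q)) = qnorm2 (qIm (cj mu (g P))).
  by rewrite -(cj_Im hmu) (cj_norm2 hmu) !norm2_Im (g_norm sP) (g_norm sQ) re_eq.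
have [A0|A0] := eqVneq (A23 P) 0.
  by rewrite -(cj_Im hmu) (Im_zero hm sP A0) (Im_zero hm sQ) -?eA // cj0.
move: E0; rewrite /u0 -eA A0 /= (cj_scale hmu) (cj_Im hmu).
have -> : gram P 2 3 = g P by [].
have -> : gram Q 2 3 = g Q by [].
rewrite /qabs nQ -(cj_Im hmu) (cj_norm2 hmu).
have [N0|N0] := eqVneq (qnorm2 (qIm (g P))) 0.
  move=> _; have h1 : qIm (g P) = 0 by apply: qnorm2_eq0.
  have h2 : qIm (g Q) = 0.
    by apply: qnorm2_eq0; rewrite nQ -(cj_Im hmu) (cj_norm2 hmu).
  by rewrite h1 h2 cj0.
rewrite !qscaleE => e.
have r0 : Num.sqrt (qnorm2 (qIm (g P))) != 0 by rewrite sqrtr_eq0 -ltNge lt_def N0 qnorm2_ge0.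
have := congr1 (fun x => rq (Num.sqrt (qnorm2 (qIm (g P)))) * x) e.
by rewrite !mulrA !rqM mulfV // rq1 !mul1r.
Qed.
Definition ok a b := hform (Q a) (Q b) = cj mu (hform (P a) (P b)).

Lemma ok_sym a b : ok a b -> ok b a.
Proof. by rewrite /ok (hform_sym (Q a)) (hform_sym (P a)) => ->; rewrite cj_conj. Qed.
Lemma ok_diag a : (a < m)%N -> ok a a.
Proof. by move=> am; rewrite /ok (G_null hQ am) (G_null hP am) cj0. Qed.
Lemma ok_a0 a : (1 <= a < m)%N -> ok a 0.
Proof. by move=> am; rewrite /ok (G_a0 sQ am) (G_a0 sP am) (cj1 hmu). Qed.
Lemma ok_21 : ok 2 1.
Proof. exact: step_g. Qed.
Lemma ok_j1 j : (3 <= j < m)%N -> ok j 1.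
Proof. by move=> hj; rewrite /ok (CR1 hm sQ hj) (CR1 hm sP hj) E1 // step_g (cjM hmu). Qed.
Lemma ok_j2 j : (3 <= j < m)%N -> ok j 2.
Proof. by move=> hj; rewrite /ok (CR2 hm hQ sQ hj) (CR2 hm hP sP hj) E2 // step_g -cj_conj (cjM hmu). Qed.
Lemma ok_jk k j : (3 <= k)%N -> (k < j < m)%N -> ok j k.
Proof.
move=> hk hj; rewrite /ok (CR3 hm hQ sQ hk hj) (CR3 hm hP sP hk hj) E3 // (cjM hmu).
have -> // : hform (Q 1) (Q k) = cj mu (hform (P 1) (P k)).
apply: ok_sym; apply: ok_j1; lia.
Qed.

Lemma ok_all a b : (a < m)%N -> (b < m)%N -> ok a b.
Proof.
wlog: a b / (b <= a)%N.
  move=> H am bm; case: (leqP b a) => ab; first exact: H.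
  apply: ok_sym; apply: H => //; exact: ltnW.
move=> ba am bm; case: (ltngtP a b) => [|//|<-]; [lia | | exact: ok_diag].
move=> {}ba.
case: b ba bm => [|[|[|b]]] ba bm.
- apply: ok_a0; lia.
- case: a ba am => [|[|[|a]]] ba am //; first exact: ok_21.
  apply: ok_j1; lia.
- apply: ok_j2; lia.
- apply: ok_jk; lia.
Qed.
End Main.

Unset Implicit Arguments.
Theorem corollary1p6 (R : realType) (n m : nat) (P Q : nat -> qvec R n) :
  (1 <= n)%N -> (4 <= m)%N ->
  distinct_boundary_tuple m P -> distinct_boundary_tuple m Q ->
  semi_normalized m P -> semi_normalized m Q ->
  sp1_congruent (Finv m P) (Finv m Q) ->
  A23 P = A23 Q ->
  psp_congruent m P Q.
Proof.
move=> _ hm hP hQ sP sQ hsp eA.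
have [mu [hmu E0 E1 E2 E3]] := extract hsp.
have mu0 : mu != 0.
  apply/eqP => h; move: hmu; rewrite h /qnorm2 /= expr0n /= !addr0 => /eqP; by rewrite eq_sym oner_eq0.
have cmu0 : qconj mu != 0 by rewrite qconj_eq0.
pose X i := vscale (P i) (qconj mu).
have hG : forall a b, (a < m)%N -> (b < m)%N -> hform (X a) (X b) = hform (Q a) (Q b).
  move=> a b am bm; rewrite /X hformZl hformZr qconjK.
  have := ok_all hm hP hQ sP sQ hmu E0 E1 E2 E3 eA am bm; rewrite /ok => ->.
  by [].
have hXn : forall i, (i < m)%N -> vnonzero (X i).
  move=> i im; have [[k hk] _] := (proj1 hP) i im.
  exists k; rewrite /X /vscale => /eqP; rewrite qmulE q0E; apply/negP.
  apply: qmul_neq0 => //; apply/eqP; exact: hk.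
have [f [gf hf]] := construct (ltnW (ltnW hm)) hXn hQ hG (leqnn m).
have [M [HM HMf]] := good_Sp gf.
exists M; split=> // i im.
have [[_ fs] _ _] := gf.
have -> : P i = vscale (X i) mu.
  apply: funext => k; by rewrite /X /vscale !qmulE -mulrA (c_mu hmu) mulr1.
rewrite HMf fs hf //.
exists (qconj mu); split; first by apply/eqP.
apply: funext => k; by rewrite /vscale !qmulE -mulrA (mu_c hmu) mulr1.
Qed.
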